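(* The axiom system $E_{FTP}$ is head normalizing for $T(\Sigma_{FTP})$: for every $t\in T(\Sigma_{FTP})$ there exists $t'\in T(\Sigma_{FTP})$ in head normal form such that $E_{FTP}\vdash t=t'$.
   Context: Fix a finite nonempty set $\mathcal A$ of actions, a finite set $\mathcal P$ of predicates, a subset $\mathcal P^I\subseteq\mathcal P$ of ''implicit'' predicates, and for each $P\in\mathcal P^I$ a set $\mathcal A_P\subseteq\mathcal A$. The signature $\Sigma_{FTP}$ consists of a constant $\delta$, a constant $\kappa_P$ for each $P\in\mathcal P$, a unary prefix $a.\_$ for each $a\in\mathcal A$, and binary $+$. Its operational semantics (transitions $\xrightarrow{a}$ and predicates $P\,t$ on closed terms) is the least one closed under the rules: $a.x\xrightarrow{a}x$; if $x\xrightarrow{a}x'$ then $x+y\xrightarrow{a}x'$; if $y\xrightarrow{a}y'$ then $x+y\xrightarrow{a}y'$; $P\kappa_P$; if $Px$ then $P(x+y)$; if $Py$ then $P(x+y)$; if $Px$ then $P(a.x)$ for all $P\in\mathcal P^I$ and $a\in\mathcal A_P$. $E_{FTP}$ consists of the axioms $x+y=y+x$, $(x+y)+z=x+(y+z)$, $x+x=x$, $x+\delta=x$, and $a.(x+\kappa_P)=a.(x+\kappa_P)+\kappa_P$ for all $P\in\mathcal P^I$, $a\in\mathcal A_P$. $E\vdash s=t$ means $s=t$ is derivable in equational logic (reflexivity, symmetry, transitivity, substitution instances, congruence). For a signature $\Sigma\supseteq\Sigma_{FTP}$, a closed term $t$ is in head normal form if $t=\sum_{i\in I}a_i.t_i+\sum_{j\in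 J}\kappa_{P_j}$ (finite sums, empty sum being $\delta$) where $\{P_j\mid j\in J\}$ is exactly the set of predicates satisfied by $t$. *)

(* Defs.v *)
From mathcomp Require Import all_boot.
Set Implicit Arguments. Unset Strict Implicit. Unset Printing Implicit Defensive.

Section FTP.
Variables (Act Pr : finType).
(* implicit predicates P^I and, for each P, the set A_P *)
Variables (PI : {set Pr}) (AP : Pr -> {set Act}).

Inductive term : Type :=
| Var : nat -> term
| Delta : term
| Kappa : Pr -> term
| Pref : Act -> term -> term
| Plus : term -> term -> term.

Fixpoint closed_term (t : term) : Prop :=
  match t with
  | Var _ => False
  | Delta | Kappa _ => True
  | Pref _ x => closed_term x
  | Plus x y => closed_term x /\ closed_term y
  end.

Fixpoint subst (s : nat -> term) (t : term) : term :=
  match t with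
  | Var n => s n
  | Delta => Delta
  | Kappa P => Kappa P
  | Pref a x => Pref a (subst s x)
  | Plus x y => Plus (subst s x) (subst s y)
  end.

Inductive step : term -> Act -> term -> Prop :=
| step_pref a x : step (Pref a x) a x
| step_plusl x y a x' : step x a x' -> step (Plus x y) a x'
| step_plusr x y a y' : step y a y' -> step (Plus x y) a y'.

Inductive holds : Pr -> term -> Prop :=
| holds_kappa P : holds P (Kappa P)
| holds_plusl P x y : holds P x -> holds P (Plus x y)
| holds_plusr P x y : holds P y -> holds P (Plus x y)
| holds_pref P a x : P \in PI -> a \in AP P -> holds P x -> holds P (Pref a x).

Inductive E_FTP : term -> term -> Prop :=
| ax_comm : E_FTP (Plus (Var 0) (Var 1)) (Plus (Var 1) (Var 0))
| ax_assoc : E_FTP (Plus (Plus (Var 0) (Var 1)) (Var 2))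
                   (Plus (Var 0) (Plus (Var 1) (Var 2)))
| ax_idem : E_FTP (Plus (Var 0) (Var 0)) (Var 0)
| ax_delta : E_FTP (Plus (Var 0) Delta) (Var 0)
| ax_impl P a : P \in PI -> a \in AP P ->
    E_FTP (Pref a (Plus (Var 0) (Kappa P)))
          (Plus (Pref a (Plus (Var 0) (Kappa P))) (Kappa P)).

Inductive derivable : term -> term -> Prop :=
| der_ax s t : E_FTP s t -> derivable s t
| der_refl t : derivable t t
| der_sym s t : derivable s t -> derivable t s
| der_trans s t u : derivable s t -> derivable t u -> derivable s u
| der_subst (sg : nat -> term) s t : derivable s t -> derivable (subst sg s) (subst sg t)
| der_pref a s t : derivable s t -> derivable (Pref a s) (Pref a t)
| der_plus s1 s2 t1 t2 : derivable s1 t1 -> derivable s2 t2 ->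
    derivable (Plus s1 s2) (Plus t1 t2).

Fixpoint sum_list (l : seq term) : term :=
  match l with
  | [::] => Delta
  | [:: x] => x
  | x :: l' => Plus x (sum_list l')
  end.

Definition hnf (t : term) : Prop :=
  exists (pre : seq (Act * term)) (ks : seq Pr),
    t = sum_list ([seq Pref p.1 p.2 | p <- pre] ++ [seq Kappa P | P <- ks])
    /\ (forall P : Pr, holds P t <-> P \in ks).

End FTP.

(* Main.v *)
From Stdlib Require Import List.
Require Import Defs.
From mathcomp Require Import all_boot.
Set Implicit Arguments. Unset Strict Implicit.

Section S.
Variables (Act Pr : finType) (PI : {set Pr}) (AP : Pr -> {set Act}).
Local Notation D := (derivable PI AP).
Local Notation T := (term Act Pr).
Local Notation sum := (@sum_list Act Pr).

Definition sg (a b c : T) (n : nat) : T :=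
  match n with 0 => a | 1 => b | _ => c end.

Lemma d_comm x y : D (Plus x y) (Plus y x).
Proof.
change (D (subst (sg x y (Delta Act Pr)) (Plus (Var _ _ 0) (Var _ _ 1)))
          (subst (sg x y (Delta Act Pr)) (Plus (Var _ _ 1) (Var _ _ 0)))).
apply: der_subst; apply: der_ax; constructor.
Qed.
Lemma d_assoc x y z : D (Plus (Plus x y) z) (Plus x (Plus y z)).
Proof.
change (D (subst (sg x y z) (Plus (Plus (Var _ _ 0) (Var _ _ 1)) (Var _ _ 2)))
          (subst (sg x y z) (Plus (Var _ _ 0) (Plus (Var _ _ 1) (Var _ _ 2))))).
apply: der_subst; apply: der_ax; constructor.
Qed.
Lemma d_idem x : D (Plus x x) x.
Proof.
change (D (subst (sg x x x) (Plus (Var _ _ 0) (Var _ _ 0)))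
          (subst (sg x x x) (Var _ _ 0))).
apply: der_subst; apply: der_ax; constructor.
Qed.
Lemma d_delta x : D (Plus x (Delta Act Pr)) x.
Proof.
change (D (subst (sg x x x) (Plus (Var _ _ 0) (Delta Act Pr)))
          (subst (sg x x x) (Var _ _ 0))).
apply: der_subst; apply: der_ax; constructor.
Qed.
Lemma d_impl P a x : P \in PI -> a \in AP P ->
  D (Pref a (Plus x (Kappa Act P))) (Plus (Pref a (Plus x (Kappa Act P))) (Kappa Act P)).
Proof.
move=> H1 H2.
change (D (subst (sg x x x) (Pref a (Plus (Var _ _ 0) (Kappa Act P))))
          (subst (sg x x x) (Plus (Pref a (Plus (Var _ _ 0) (Kappa Act P))) (Kappa Act P)))).
apply: der_subst; apply: der_ax; by constructor.
Qed.

Lemma dtr s t u : D s t -> D t u -> D s u. Proof. exact: der_trans. Qed.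
Lemma dplusl x x' y : D x x' -> D (Plus x y) (Plus x' y).
Proof. move=> H; apply: der_plus => //; apply: der_refl. Qed.
Lemma dplusr x y y' : D y y' -> D (Plus x y) (Plus x y').
Proof. move=> H; apply: der_plus => //; apply: der_refl. Qed.

Lemma holds_absorb P u : holds PI AP P u -> D u (Plus u (Kappa Act P)).
Proof.
elim=> {P u}.
- move=> P; apply: der_sym; apply: d_idem.
- move=> P x y _ IH.
  apply: (dtr (dplusl _ IH)); apply: (dtr (d_assoc _ _ _)).
  apply: (dtr (dplusr _ (d_comm _ _))); apply: der_sym; apply: d_assoc.
- move=> P x y _ IH.
  apply: (dtr (dplusr _ IH)); apply: der_sym; apply: d_assoc.
- move=> P a x H1 H2 _ IH.
  apply: (dtr (der_pref a IH)); apply: (dtr (d_impl _ H1 H2)).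
  apply: dplusl; apply: der_sym; exact: der_pref.
Qed.

Lemma sum_cons x l : D (sum (x :: l)) (Plus x (sum l)).
Proof. case: l => [|y l] /=; [apply: der_sym; apply: d_delta | apply: der_refl]. Qed.

Lemma sum_cat l1 l2 : D (sum (l1 ++ l2)) (Plus (sum l1) (sum l2)).
Proof.
elim: l1 => [|x l1 IH] /=.
- apply: der_sym; apply: (dtr (d_comm _ _)); apply: d_delta.
- apply: (dtr (sum_cons _ _)); apply: (dtr (dplusr _ IH)).
  apply: (dtr (der_sym (d_assoc _ _ _))); apply: dplusl; apply: der_sym; apply: sum_cons.
Qed.

Definition Abs s x := D s (Plus s x).

Lemma abs_list s l : (forall x, In x l -> Abs s x) -> Abs s (sum l).
Proof.
elim: l => [|x l IH] H /=.
- apply: der_sym; apply: d_delta.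
- have H1 : Abs s (sum l) by apply: IH => y Hy; apply: H; right.
  apply: (dtr H1); apply: (dtr (dplusl _ (H x (or_introl erefl)))).
  apply: (dtr (d_assoc _ _ _)); apply: dplusr; apply: der_sym; apply: sum_cons.
Qed.

Lemma abs_mem x l : In x l -> Abs (sum l) x.
Proof.
elim: l => [|y l IH] //= [<-|Hx].
- apply: (dtr (sum_cons _ _)); apply: (dtr (dplusl _ (der_sym (d_idem _)))).
  apply: (dtr (d_assoc _ _ _)); apply: (dtr (d_comm _ _)); apply: dplusl.
  apply: der_sym; apply: sum_cons.
- apply: (dtr (sum_cons _ _)); apply: (dtr (dplusr _ (IH Hx))).
  apply: (dtr (der_sym (d_assoc _ _ _))); apply: dplusl; apply: der_sym; apply: sum_cons.
Qed.

Lemma abs_eq s t : Abs s t -> Abs t s -> D s t.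
Proof. move=> H1 H2; apply: (dtr H1); apply: (dtr (d_comm _ _)); exact: der_sym. Qed.

Fixpoint summands (t : T) : seq T :=
  match t with Plus x y => summands x ++ summands y | Delta => [::] | _ => [:: t] end.
Fixpoint prefs (t : T) : seq (Act * T) :=
  match t with Plus x y => prefs x ++ prefs y | Pref a u => [:: (a, u)] | _ => [::] end.

Lemma In_cat (A : Type) (x : A) l1 l2 : In x (l1 ++ l2) <-> In x l1 \/ In x l2.
Proof.
elim: l1 => [|y l1 IH] /=; first by intuition.
rewrite IH; intuition.
Qed.

Lemma In_map (A B : Type) (f : A -> B) x l : In x (map f l) <-> exists y, x = f y /\ In y l.
Proof.
elim: l => [|y l IH] /=; first by split => // [[y []]].
split.
- case=> [H|H]; first by exists y; auto.
  case: (proj1 IH H) => z [-> Hz]; by exists z; auto.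
- case=> z [Ex [Ey|Hz]]; first by left; subst.
  right; apply: (proj2 IH); by exists z.
Qed.

Lemma In_mem (A : eqType) (x : A) l : In x l <-> x \in l.
Proof.
elim: l => [|y l IH] //=; rewrite inE IH; split.
- by case=> [->|->]; rewrite ?eqxx ?orbT.
- by case/orP => [/eqP ->|->]; auto.
Qed.

Lemma sum_summands t : D t (sum (summands t)).
Proof.
elim: t => [n||P|a x _|x IHx y IHy] /=; try apply: der_refl.
apply: (dtr (der_plus IHx IHy)); apply: der_sym; apply: sum_cat.
Qed.

Lemma summ_char t x : closed_term t -> In x (summands t) ->
  (exists a u, x = Pref a u /\ In (a, u) (prefs t)) \/
  (exists Q, x = Kappa Act Q /\ holds PI AP Q t).
Proof.
elim: t => [n||P|a u _|y IHy z IHz] //=.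
- move=> _ [<-|//]; right; exists P; split => //; constructor.
- move=> _ [<-|//]; left; exists a, u; auto.
- case=> Hy Hz /In_cat [H|H].
  + case: (IHy Hy H) => [[a [u [-> Hu]]]|[Q [-> HQ]]].
    * left; exists a, u; split => //; apply/In_cat; auto.
    * right; exists Q; split => //; exact: holds_plusl.
  + case: (IHz Hz H) => [[a [u [-> Hu]]]|[Q [-> HQ]]].
    * left; exists a, u; split => //; apply/In_cat; auto.
    * right; exists Q; split => //; exact: holds_plusr.
Qed.

Lemma prefs_summ t a u : In (a, u) (prefs t) -> In (Pref a u) (summands t).
Proof.
elim: t => [n||P|b v _|y IHy z IHz] //=.
- by case=> // [[-> ->]]; left.
- by move/In_cat => [H|H]; apply/In_cat; auto.
Qed.

Lemma summ_holds t x P : In x (summands t) -> holds PI AP P x -> holds PI AP P t.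
Proof.
elim: t => [n||Q|b v _|y IHy z IHz] //=.
- by case=> // <-.
- by case=> // <-.
- by case=> // <-.
- move/In_cat => [H|H] Hx; [apply: holds_plusl; exact: IHy | apply: holds_plusr; exact: IHz].
Qed.

Lemma prefs_closed t a u : closed_term t -> In (a, u) (prefs t) -> closed_term u.
Proof.
elim: t => [n||Q|b v _|y IHy z IHz] //=.
- by move=> H [[_ <-]|].
- by case=> Hy Hz /In_cat [H|H]; eauto.
Qed.

Fixpoint holdsb (P : Pr) (t : T) : bool :=
  match t with
  | Kappa Q => Q == P
  | Plus x y => holdsb P x || holdsb P y
  | Pref a x => [&& P \in PI, a \in AP P & holdsb P x]
  | _ => false
  end.

Lemma holds_plus P x y : holds PI AP P (Plus x y) <-> holds PI AP P x \/ holds PI AP P y.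
Proof.
split; first by move=> H; inversion H; auto.
by case=> H; [apply: holds_plusl | apply: holds_plusr].
Qed.

Lemma holdsP P t : holds PI AP P t <-> holdsb P t.
Proof.
elim: t => [n||Q|a x IH|x IHx y IHy] /=.
- by split => // H; inversion H.
- by split => // H; inversion H.
- split; first by move=> H; inversion H.
  by move/eqP => ->; constructor.
- split; first by move=> H; inversion H; subst; rewrite H2 H4 /=; apply/IH.
  by case/and3P => H1 H2 H3; apply: holds_pref => //; apply/IH.
- rewrite holds_plus IHx IHy; split; first by case=> ->; rewrite ?orbT.
  by case/orP; auto.
Qed.

Lemma holds_sum P l : holds PI AP P (sum l) <-> exists x, In x l /\ holds PI AP P x.
Proof.
elim: l => [|x l IH].
- by split; [move=> H; inversion H | case=> x []].
- case: l IH => [|y l] IH /=.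
  + split; first by move=> H; exists x; auto.
    by case=> z [[<-|[]] H].
  + rewrite holds_plus IH; split.
    * case=> [H|[z [Hz H]]]; [exists x; auto | exists z; auto].
    * case=> z [[<-|Hz] H]; auto; right; exists z; auto.
Qed.

Lemma closed_sum l : (forall x, In x l -> closed_term x) -> closed_term (sum l).
Proof.
elim: l => [|x l IH] H //=.
case: l IH H => [|y l] IH H; first by apply: H; left.
split; first by apply: H; left.
by apply: IH => z Hz; apply: H; right.
Qed.

End S.

Theorem lemma2 (Act Pr : finType) (hA : 0 < #|Act|)
    (PI : {set Pr}) (AP : Pr -> {set Act})
    (t : term Act Pr) :
  closed_term t ->
  exists t' : term Act Pr,
    closed_term t' /\ hnf PI AP t' /\ derivable PI AP t t'.
Proof.
move=> Ht.
set ks := [seq P <- enum Pr | holdsb PI AP P t].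
have Hks : forall P, P \in ks <-> holds PI AP P t.
  by move=> P; rewrite mem_filter mem_enum andbT; split => /holdsP.
set B := [seq Pref p.1 p.2 | p <- prefs t] ++ [seq Kappa Act P | P <- ks].
have HB : forall x, In x B <->
   (exists a u, x = Pref a u /\ In (a, u) (prefs t)) \/
   (exists Q, x = Kappa Act Q /\ holds PI AP Q t).
  move=> x; rewrite /B In_cat !In_map; split.
  - case=> [[[a u] [-> H]]|[Q [-> H]]]; [left; by exists a, u | right; exists Q].
    by split => //; apply/Hks/In_mem.
  - case=> [[a [u [-> H]]]|[Q [-> H]]]; [left; by exists (a, u) | right; exists Q].
    by split => //; apply/In_mem/Hks.
exists (sum_list B); split; [|split].
- apply: closed_sum => x /HB [[a [u [-> H]]]|[Q [-> _]]] //=.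
  exact: prefs_closed H.
- exists (prefs t), ks; split => // P.
  rewrite holds_sum Hks; split.
  + case=> x [/HB [[a [u [-> H]]]|[Q [-> HQ]]] Hx].
    * exact: summ_holds (prefs_summ H) Hx.
    * by inversion Hx; subst.
  + move=> H; exists (Kappa Act P); split; last by constructor.
    by apply/HB; right; exists P.
- set A := summands t ++ [seq Kappa Act P | P <- ks].
  have HS := sum_summands PI AP t.
  have E1 : derivable PI AP (sum_list (summands t)) (sum_list A).
    apply: abs_eq.
    + apply: abs_list => x /In_cat [H|/In_map [P [-> HP]]]; first exact: abs_mem.
      have HP' : holds PI AP P t by apply/Hks/In_mem.
      rewrite /Abs; apply: (dtr (der_sym HS)); apply: (dtr (holds_absorb HP')).
      exact: dplusl.
    + apply: abs_list => x Hx; apply: abs_mem; apply/In_cat; by left.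
  have E2 : derivable PI AP (sum_list A) (sum_list B).
    apply: abs_eq.
    + apply: abs_list => x /HB [[a [u [-> H]]]|[Q [-> H]]]; apply: abs_mem; apply/In_cat.
      * by left; apply: prefs_summ.
      * by right; apply/In_map; exists Q; split => //; apply/In_mem/Hks.
    + apply: abs_list => x /In_cat [H|H]; apply: abs_mem.
      * by apply/HB; exact: summ_char H.
      * by apply/In_cat; right.
  exact: der_trans HS (der_trans E1 E2).
Qed.
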